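(* For every $T\ge0$ and integers $0\le\ell\le k$, $a(k,T)-a(\ell,T)\le k-\ell$. In particular $a(k+1,T)\le a(k,T)+1$.
   Context: Let $\lambda>0$ and let $N$ be a Poisson process with intensity $\lambda$, arrival times $0<\sigma_1<\sigma_2<\cdots$, and natural filtration $\mathcal F_t=\sigma(N_s:s\le t)$. Let $F:[0,\infty)\to[0,\infty)$ be strictly increasing and strictly convex with $F(0)=0$. For $k\in\{0,1,\dots\}$ let $\mathcal A_k$ be the set of $(\mathcal F_t)$-adapted, integer-valued, nonnegative, non-increasing processes $\xi$ with $\xi_0=k$ whose values change only at arrival times of $N$, and $v(k,T)=\inf_{\xi\in\mathcal A_k}\mathbb E[\sum_{i:\sigma_i\le T}F(\xi_{\sigma_i-}-\xi_{\sigma_i})+F(\xi_T)]$. For $k\in\mathbb N_+$, $a(k,T)$ is the smallest minimizer over $a\in\{1,\dots,k\}$ of $v(k-a,T)+F(a)$, and $a(0,T)=0$. *)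

(* Defs.v *)
From HB Require Import structures.
From mathcomp Require Import all_boot all_order all_algebra.
From mathcomp Require Import all_classical all_reals all_analysis.
From mathcomp Require Import measurable_realfun.
Set Implicit Arguments. Unset Strict Implicit. Unset Printing Implicit Defensive.
Import Order.TTheory GRing.Theory Num.Theory.
Local Open Scope classical_set_scope.
Local Open Scope ring_scope.

Section Defs.
Context {R : realType} {d : measure_display} {Omega : measurableType d}.
Variable P : probability Omega R.

Definition interarrival (sigma : nat -> Omega -> R) (i : nat) : Omega -> R :=
  fun w => sigma i.+1 w - sigma i w.

(* N is a Poisson process of intensity lam with arrival times
   0 = sigma_0 < sigma_1 < sigma_2 < ... (sigma_i -> +oo on every path):
   the inter-arrival times are mutually independent Exp(lam) random variables. *)
Definition poisson_arrivals (lam : R) (sigma : nat -> Omega -> R) : Prop :=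
  [/\ (forall w, sigma 0%N w = 0),
      (forall i w, sigma i w < sigma i.+1 w),
      (forall w, (fun i => sigma i w) @ \oo --> +oo) &
      (forall i, measurable_fun setT (sigma i)) /\
      (forall i (x : R), 0 <= x ->
          P [set w | x < interarrival sigma i w] = (expR (- (lam * x)))%:E) /\
      (forall (n : nat) (B : nat -> set R), (forall i, measurable (B i)) ->
          fine (P (\bigcap_(i in `I_n) (interarrival sigma i @^-1` B i)))
          = \prod_(i < n) fine (P (interarrival sigma i @^-1` B i)))].

Definition Npr (sigma : nat -> Omega -> R) (s : R) (w : Omega) : \bar R :=
  (\sum_(i <oo) (if sigma i.+1 w <= s then 1 else 0)%:E)%E.

Definition natfilt (sigma : nat -> Omega -> R) (t : R) : set (set Omega) :=
  smallest (sigma_algebra setT)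
    [set A | exists s : R, exists B : set (\bar R),
       [/\ s <= t, measurable B & A = Npr sigma s @^-1` B]].

(* the admissible strategies A_k: integer-valued nonnegative (nat-valued),
   adapted, non-increasing, xi_0 = k, changing only at arrival times
   (hence constant on [sigma_i, sigma_(i+1)), jumps exactly at sigma_i). *)
Definition admissible (sigma : nat -> Omega -> R) (k : nat)
    (xi : R -> Omega -> nat) : Prop :=
  [/\ (forall w, xi 0 w = k),
      (forall t (n : nat), 0 <= t -> natfilt sigma t [set w | xi t w = n]),
      (forall w s t, 0 <= s -> s <= t -> (xi t w <= xi s w)%N) &
      (forall w s t, 0 <= s -> s < t ->
          (forall i, ~ (s < sigma i.+1 w /\ sigma i.+1 w <= t)) ->
          xi t w = xi s w)].

(* pathwise cost: sum over arrivals sigma_(i+1) <= T of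
   F(xi_(sigma_(i+1)-) - xi_(sigma_(i+1))) + F(xi_T);
   the left limit xi_(sigma_(i+1)-) equals xi_(sigma_i) since xi is constant
   on [sigma_i, sigma_(i+1)). *)
Definition pathcost (sigma : nat -> Omega -> R) (F : R -> R) (T : R)
    (xi : R -> Omega -> nat) (w : Omega) : \bar R :=
  ((\sum_(i <oo)
      (if sigma i.+1 w <= T
       then F ((xi (sigma i w) w - xi (sigma i.+1 w) w)%N%:R) else 0)%:E)
   + (F (xi T w)%:R)%:E)%E.

Definition value (sigma : nat -> Omega -> R) (F : R -> R) (k : nat) (T : R)
    : \bar R :=
  ereal_inf [set c | exists xi, admissible sigma k xi /\
                       c = (\int[P]_w pathcost sigma F T xi w)%E].

(* a(k,T): smallest minimizer over a in {1,..,k} of v(k-a,T) + F(a);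
   a(0,T) = 0 (iota 1 0 is empty). *)
Definition aopt (sigma : nat -> Omega -> R) (F : R -> R) (k : nat) (T : R)
    : nat :=
  head 0%N [seq a <- iota 1 k |
     all (fun b => (value sigma F (k - a) T + (F a%:R)%:E <=
                    value sigma F (k - b) T + (F b%:R)%:E)%E) (iota 1 k)].

End Defs.

(* Main.v *)
Require Import Defs.
From HB Require Import structures.
From mathcomp Require Import all_boot all_order all_algebra.
From mathcomp Require Import all_classical all_reals all_analysis.
From mathcomp Require Import measurable_realfun.
From mathcomp Require Import ring lra zify.
Import Order.TTheory GRing.Theory Num.Theory.
Local Open Scope classical_set_scope.
Local Open Scope ring_scope.
Set Implicit Arguments. Unset Strict Implicit.

Definition am (R : realType) (h : nat -> R) (k : nat) : nat :=
  head 0%N [seq a <- iota 1 k | all (fun b => h a <= h b) (iota 1 k)].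

Lemma head_filter_le (p : pred nat) m n c :
  c \in iota m n -> p c -> (head 0%N (seq.filter p (iota m n)) <= c)%N.
Proof.
elim: n m => [|n IH] m //=.
rewrite inE => /orP [/eqP -> -> //| Hc pc].
case: (p m) => /=.
  by move: Hc; rewrite mem_iota; case/andP => /ltnW.
exact: IH.
Qed.

Lemma head_filter_in (p : pred nat) s :
  has p s -> head 0%N (seq.filter p s) \in s /\ p (head 0%N (seq.filter p s)).
Proof.
elim: s => [|x s IH] //=.
case px: (p x) => /=; first by rewrite inE eqxx px.
move=> /IH [h1 h2]; by rewrite inE h1 orbT.
Qed.

Lemma head_filter_iota_le (p : pred nat) k :
  (head 0%N (seq.filter p (iota 1 k)) <= k)%N.
Proof.
case H: (has p (iota 1 k)).
  have [h1 _] := head_filter_in (p:=p) H; move: h1; rewrite mem_iota.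
  by case/andP => _; rewrite add1n ltnS.
by move/negbT: H; rewrite has_filter negbK => /eqP ->.
Qed.

Lemma exists_min (R : realType) (h : nat -> R) (s : seq nat) :
  s != [::] -> exists c, c \in s /\ all (fun b => h c <= h b) s.
Proof.
elim: s => [|x s IH] // _.
case: s IH => [|y s] IH.
  by exists x; rewrite inE eqxx /= lexx.
have [c [Hc Hm]] := IH isT.
case: (lerP (h x) (h c)) => hxc.
  exists x; rewrite inE eqxx; split => //.
  apply/allP => b; rewrite inE => /orP [/eqP -> //|Hb].
  apply: le_trans hxc _; exact: (allP Hm).
exists c; rewrite inE Hc orbT; split => //.
apply/allP => b; rewrite inE => /orP [/eqP -> |Hb]; first exact: ltW.
exact: (allP Hm).
Qed.

Lemma am_min (R : realType) (h : nat -> R) k :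
  (0 < k)%N -> (1 <= am h k <= k)%N /\
    forall b, (1 <= b <= k)%N -> h (am h k) <= h b.
Proof.
move=> k0.
have [c [Hc Hmin]] : exists c, c \in iota 1 k /\ all (fun b => h c <= h b) (iota 1 k).
  apply: exists_min; by case: k k0.
have Hhas : has (fun a => all (fun b => h a <= h b) (iota 1 k)) (iota 1 k).
  by apply/hasP; exists c.
have [h1 h2] := head_filter_in (p:=(fun a => all (fun b => h a <= h b) (iota 1 k))) Hhas.
rewrite /am; split.
  by move: h1; rewrite mem_iota add1n ltnS.
move=> b Hb; apply: (allP h2); by rewrite mem_iota add1n ltnS.
Qed.

Lemma am_le (R : realType) (h : nat -> R) k c :
  (1 <= c <= k)%N -> (forall b, (1 <= b <= k)%N -> h c <= h b) ->
  (am h k <= c)%N.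
Proof.
move=> Hc Hm; apply: head_filter_le; first by rewrite mem_iota add1n ltnS.
apply/allP => b; rewrite mem_iota add1n ltnS; exact: Hm.
Qed.

Lemma am_step (R : realType) (w : nat -> R) (F : R -> R) :
  (forall x y : nat, (x <= y)%N -> F x.+1%:R - F x%:R <= F y.+1%:R - F y%:R) ->
  forall k, (am (fun a => (w (k.+1 - a)%N + F a%:R)%R) k.+1 <=
             am (fun a => (w (k - a)%N + F a%:R)%R) k + 1)%N.
Proof.
move=> Hinc k.
case: k => [|k]; first by rewrite addn1; apply: head_filter_iota_le.
set h := (fun a => (w (k.+1 - a)%N + F a%:R)%R).
set h' := (fun a => w (k.+2 - a)%N + F a%:R).
have [/andP [a1 a2] Ha] := am_min h (isT : (0 < k.+1)%N).
set a := am h k.+1 in a1 a2 Ha *.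
have [/andP [m1 m2] Hm] := am_min h' (isT : (0 < k.+2)%N).
set m := am h' k.+2 in m1 m2 Hm *.
rewrite leqNgt; apply/negP => Hma.
suff : (m <= a + 1)%N by rewrite leqNgt Hma.
rewrite /m; apply: am_le; first by rewrite addn1 /= ltnS a2.

move=> b Hb; apply: le_trans (Hm _ Hb).
clearbody m.
case: m m1 m2 Hm Hma => // m' _ m2 Hm Hma.
have Ham : (a <= m')%N by move: Hma; rewrite addn1 ltnS => /ltnW.
have Hm2 : (1 <= m' <= k.+1)%N.
  by apply/andP; split; [apply: leq_trans a1 Ham | ].
have := Ha _ Hm2; have := Hinc _ _ Ham.
rewrite /h /h' !subSS addn1 subSS.
lra.
Qed.

Section Main.
Context (R : realType) (d : measure_display) (Omega : measurableType d)
  (P : probability Omega R) (sigma : nat -> Omega -> R) (F : R -> R).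
Hypothesis F0 : F 0 = 0.
Hypothesis Fpos : forall x, 0 <= x -> 0 <= F x.

Lemma value_bounds k T :
  (0 <= value P sigma F k T)%E /\ (value P sigma F k T <= (F k%:R)%:E)%E.
Proof.
split.
  apply/ereal_infP => y [xi [_ ->]].
  apply: integral_ge0 => w _.
  rewrite /pathcost; apply: adde_ge0; last by rewrite lee_fin Fpos.
  apply: nneseries_ge0 => n _ _; case: ifP => _; rewrite lee_fin ?lexx //.
  exact: Fpos.
apply: ge_ereal_inf; exists (F k%:R)%:E => //.
exists (fun _ _ => k); split.
  split => //.
  - move=> t n _; case: (eqVneq k n) => [->|Hkn].
      have -> : [set w : Omega | n = n] = setT by apply/seteqP; split.
      move=> X [[X0 XC _] _]; have := XC set0 X0; by rewrite setD0.
    have -> : [set w : Omega | k = n] = set0.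
      by apply/seteqP; split => // w /= /eqP; rewrite (negbTE Hkn).
    by move=> X [[X0 _ _] _].
have -> : pathcost sigma F T (fun _ _ => k) = cst (F k%:R)%:E.
  apply/funext => w; rewrite /pathcost subnn F0.
  rewrite eseries0 ?add0e // => i _ _; by case: ifP.
rewrite integral_cst //.
rewrite -[LHS]mule1; congr (_ * _)%E; symmetry; exact: probability_setT.
Qed.

Lemma value_fin k T : value P sigma F k T = (fine (value P sigma F k T))%:E.
Proof.
have [h1 h2] := value_bounds k T.
by move: h1 h2; case: (value P sigma F k T).
Qed.

Lemma aopt_am k T : aopt P sigma F k T =
  am (fun a => (fine (value P sigma F (k - a)%N T) + F a%:R)%R) k.
Proof.
rewrite /aopt /am; congr head; apply: eq_filter => a; apply: eq_all => b.
by rewrite (value_fin (k - a)) (value_fin (k - b)) -!EFinD lee_fin.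
Qed.
End Main.

Theorem corollary2p6 (R : realType) (d : measure_display)
  (Omega : measurableType d) (P : probability Omega R)
  (lam : R) (sigma : nat -> Omega -> R) (F : R -> R) :
  0 < lam ->
  poisson_arrivals P lam sigma ->
  F 0 = 0 ->
  (forall x, 0 <= x -> 0 <= F x) ->
  (forall x y, 0 <= x -> x < y -> F x < F y) ->
  (forall x y t, 0 <= x -> 0 <= y -> x != y -> 0 < t -> t < 1 ->
     F (t * x + (1 - t) * y) < t * F x + (1 - t) * F y) ->
  forall T : R, 0 <= T ->
    (forall k l : nat, (l <= k)%N ->
       (aopt P sigma F k T <= aopt P sigma F l T + (k - l))%N) /\
    (forall k : nat, (aopt P sigma F k.+1 T <= aopt P sigma F k T + 1)%N).
Proof.
move=> _ _ F0 Fpos _ Fconv T _.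
have Hinc1 : forall x : nat, F x.+1%:R - F x%:R <= F x.+2%:R - F x.+1%:R.
  move=> x.
  have := Fconv x%:R x.+2%:R (1/2) (ler0n _ _) (ler0n _ _).
  have Hne : (x%:R : R) != x.+2%:R by rewrite eqr_nat; elim: x {Fconv}.
  have -> : (1/2 * x%:R + (1 - 1/2) * x.+2%:R : R) = x.+1%:R.
    rewrite -addn1 -[x.+2]addn2 !natrD; field; done.
  have h1 : (0 < 1 / 2 :> R) by lra.
  have h2 : (1 / 2 < 1 :> R) by lra.
  move=> H; have := H Hne h1 h2. lra.
have Hinc : forall x y : nat, (x <= y)%N -> F x.+1%:R - F x%:R <= F y.+1%:R - F y%:R.
  move=> x y /subnK <-; elim: (y - x)%N => [|n IH]; first by rewrite add0n.
  apply: le_trans IH _; rewrite addSn; exact: Hinc1.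
have step : forall k, (aopt P sigma F k.+1 T <= aopt P sigma F k T + 1)%N.
  move=> k; rewrite !aopt_am //.
  exact: (am_step (fun j => fine (value P sigma F j T)) Hinc k).
split => // k l /subnK <-; rewrite addnK.
elim: (k - l)%N => [|n IH]; first by rewrite add0n addn0.
rewrite addSn; apply: leq_trans (step _) _; by rewrite addnS addn0 !addnS ltnS.
Qed.
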